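(* Let $n\ge 1$, $s\in D^n$, and let $f\in\mathrm{Min}(s)$ be monic of degree $d$. Let $t\in D^{\mathbb{N}}$ be the extension of $s$ by $f$, i.e. $t_i=s_i$ for $1\le i\le n$ and $t_j=-(f_0t_{j-d}+\cdots+f_{d-1}t_{j-1})$ for all $j\ge n+1$. If the ideal $\mathrm{Ann}(t)\subseteq D[x]$ is principal, then $\mathrm{Ann}(t)=(f)$.
   Context: Let $D$ be a commutative integral domain with $1\neq 0$. For a finite sequence $s=(s_1,\dots,s_n)\in D^n$, a polynomial $f\in D[x]$ is an annihilator of $s$, written $f\in\mathrm{Ann}(s)$, if $f=0$, or $d=\deg f\ge 0$ and $\sum_{k=0}^{d}f_ks_{j-d+k}=0$ for all $j$ with $d+1\le j\le n$. $\mathrm{Min}(s)$ denotes the set of nonzero annihilators of $s$ of least possible degree. For an infinite sequence $t=(t_1,t_2,\dots)\in D^{\mathbb{N}}$, $\mathrm{Ann}(t)$ is the set of $f\in D[x]$ such that $f=0$, or $d=\deg f\ge0$ and $\sum_{k=0}^{d}f_kt_{j-d+k}=0$ for all $j\ge d+1$; it is an ideal of $D[x]$. *)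

(* Defs.v *)
From HB Require Import structures.
From mathcomp Require Import all_boot all_order all_algebra.
Set Implicit Arguments. Unset Strict Implicit. Unset Printing Implicit Defensive.
Import Order.TTheory GRing.Theory Num.Theory.
Local Open Scope ring_scope.

(* Conventions: sequences are 1-indexed as in the paper.
   A finite sequence s = (s_1,...,s_n) is a seq D of size n, s_j = nth 0 s (j-1).
   An infinite sequence t = (t_1, t_2, ...) is a function t : nat -> D with
   t_j = t j for j >= 1 (the value t 0 is irrelevant).
   For a polynomial f, deg f = (size f).-1, so "d+1 <= j" reads "size f <= j". *)

Definition seqat (D : idomainType) (s : seq D) (j : nat) : D := nth 0 s j.-1.

Definition ann_fin (D : idomainType) (s : seq D) (f : {poly D}) : Prop :=
  f = 0 \/
  forall j : nat, (size f <= j)%N -> (j <= size s)%N ->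
    \sum_(k < size f) f`_k * seqat s (j - (size f).-1 + k)%N = 0.

Definition min_ann (D : idomainType) (s : seq D) (f : {poly D}) : Prop :=
  f != 0 /\ ann_fin s f /\
  forall g : {poly D}, g != 0 -> ann_fin s g -> (size f <= size g)%N.

Definition ann_inf (D : idomainType) (t : nat -> D) (f : {poly D}) : Prop :=
  f = 0 \/
  forall j : nat, (size f <= j)%N ->
    \sum_(k < size f) f`_k * t (j - (size f).-1 + k)%N = 0.

Definition ann_inf_generated_by (D : idomainType) (t : nat -> D) (g : {poly D}) : Prop :=
  forall h : {poly D}, ann_inf t h <-> exists r : {poly D}, h = r * g.

(* Main.v *)
Require Import Defs.
From HB Require Import structures.
From mathcomp Require Import all_boot all_order all_algebra.
Import Order.TTheory GRing.Theory Num.Theory.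
Local Open Scope ring_scope.

Lemma idx_le d j k : (k <= d)%N -> (d <= j)%N -> (j - d + k <= j)%N.
Proof. by move=> hk hd; rewrite -{2}(subnK hd) leq_add2l. Qed.
Lemma idx_ge1 d j k : (d < j)%N -> (1 <= j - d + k)%N.
Proof. by move=> h; rewrite addn_gt0 subn_gt0 h. Qed.

Theorem mainTheorem1 (D : idomainType) (n : nat) (s : n.-tuple D)
    (f : {poly D}) (t : nat -> D) :
  (1 <= n)%N ->
  min_ann s f ->
  f \is monic ->
  (forall i : nat, (1 <= i)%N -> (i <= n)%N -> t i = seqat s i) ->
  (forall j : nat, (n.+1 <= j)%N ->
     t j = - \sum_(k < (size f).-1) f`_k * t (j - (size f).-1 + k)%N) ->
  (exists g : {poly D}, ann_inf_generated_by t g) ->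
  ann_inf_generated_by t f.
Proof.
move=> n1 [fn0 [fann fmin]] fmon hts htrec [g hg].
have szs : size s = n by rewrite size_tuple.
have szf : size f = (size f).-1.+1 by rewrite prednK // size_poly_gt0.
have fAt : ann_inf t f.
  right => j hj.
  have hdj : ((size f).-1 < j)%N by rewrite -ltnS -szf.
  case: (leqP j n) => hjn.
    case: fann => [f0|fann]; first by rewrite f0 eqxx in fn0.
    rewrite -[RHS](fann j hj); last by rewrite szs.
    apply: eq_bigr => k _; congr (_ * _); apply: hts.
      exact: idx_ge1.
    apply: leq_trans hjn; apply: idx_le; last exact: ltnW.
    by rewrite -ltnS -szf.
  rewrite szf big_ord_recr /= -/(lead_coef f) (monicP fmon) mul1r.
  rewrite subnK ?(ltnW hdj) // (htrec j hjn) subrr //.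
have [r fE] := (hg f).1 fAt.
have gn0 : g != 0 by apply: contra fn0 => /eqP g0; rewrite fE g0 mulr0.
have rn0 : r != 0 by apply: contra fn0 => /eqP r0; rewrite fE r0 mul0r.
have gAt : ann_inf t g by apply/(hg g); exists 1; rewrite mul1r.
have gAs : ann_fin s g.
  case: gAt => [g0|gAt]; first by rewrite g0 eqxx in gn0.
  right => j hj hjn; rewrite szs in hjn.
  have szg : size g = (size g).-1.+1 by rewrite prednK // size_poly_gt0.
  have hdj : ((size g).-1 < j)%N by rewrite -ltnS -szg.
  rewrite -[RHS](gAt j hj); apply: eq_bigr => k _; congr (_ * _); symmetry; apply: hts.
    exact: idx_ge1.
  apply: leq_trans hjn; apply: idx_le; last exact: ltnW.
  by rewrite -ltnS -szg.
have hle := fmin g gn0 gAs.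
have szr : (size r <= 1)%N.
  move: hle; rewrite fE size_mul // => h.
  have : (size r + size g <= (size g).+1)%N.
    by rewrite -(prednK (_ : (0 < size r + size g)%N)) ?ltnS // addn_gt0 size_poly_gt0 rn0.
  by rewrite addnC -addn1 leq_add2l.
have rC := size1_polyC szr.
set c := r`_0 in rC.
have cu : c \is a GRing.unit.
  apply/unitrPr; exists (lead_coef g).
  by rewrite -(monicP fmon) fE rC lead_coefM lead_coefC.
have gE : g = c^-1%:P * f by rewrite fE rC mulrA -polyCM mulVr // mul1r.
move=> h; split.
  by move=> /(hg h) [r' ->]; exists (r' * c^-1%:P); rewrite gE mulrA.
by move=> [r' ->]; apply/(hg _); exists (r' * r); rewrite fE mulrA.
Qed.
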